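(* Let $1\le r\le K\le d$, let $p\ge1$ and positive integers $h_1,\ldots,h_p$ with $\sum_i h_i=r$ be given. For $\bm{q}\in\{\pm1\}^r$ define $$\mathcal{Q}_{\bm{q}}=\left\{\begin{bmatrix}\bm{U}\operatorname{diag}(\bm{q})\bm{U}^T&\bm{0}\\\bm{0}&\bm{V}\end{bmatrix}:\bm{U}=\operatorname{blkdiag}(\bm{U}_1,\ldots,\bm{U}_p),\ \bm{U}_i\in\mathcal{O}^{h_i}\ (i=1,\ldots,p),\ \bm{V}\in{\rm St}(d-r,K-r)\right\}\subseteq\mathbb{R}^{d\times K}.$$ Then for any $\bm{q},\bm{q}'\in\{\pm1\}^r$, either $\mathcal{Q}_{\bm{q}}=\mathcal{Q}_{\bm{q}'}$ or $\mathcal{Q}_{\bm{q}}\cap\mathcal{Q}_{\bm{q}'}=\emptyset$; moreover, in the latter case $\operatorname{dist}(\mathcal{Q}_{\bm{q}},\mathcal{Q}_{\bm{q}'})\ge2$.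
   Context: (In the paper, $h_i$ are the multiplicities of the distinct positive singular values of a matrix $\bm{A}=\begin{bmatrix}\widetilde{\bm{A}}&\bm{0}\\\bm{0}&\bm{0}\end{bmatrix}$ with $\widetilde{\bm{A}}=\operatorname{diag}(a_1,\ldots,a_r)$, $a_1\ge\cdots\ge a_r>0$, and $\bigcup_{\bm{q}}\mathcal{Q}_{\bm{q}}$ is the set of limiting critical points of $\bm{Q}\mapsto\langle\bm{A},\bm{Q}\rangle+\delta_{{\rm St}(d,K)}(\bm{Q})$; the statement only depends on $h_1,\ldots,h_p$.) $\mathcal{O}^h$ is the set of $h\times h$ orthogonal matrices; ${\rm St}(m,k)=\{\bm{V}\in\mathbb{R}^{m\times k}:\bm{V}^T\bm{V}=\bm{I}_k\}$; $\operatorname{blkdiag}$ is the block diagonal matrix; $\operatorname{dist}(\mathcal{S},\mathcal{T})=\inf_{\bm{x}\in\mathcal{S},\bm{y}\in\mathcal{T}}\|\bm{x}-\bm{y}\|_F$. The vector $\bm{q}$ is split as $(\bm{q}_1,\ldots,\bm{q}_p)$ with $\bm{q}_i\in\{\pm1\}^{h_i}$ compatibly with the blocks. *)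

(* Defs.v *)
From HB Require Import structures.
From mathcomp Require Import all_boot all_order all_algebra.
From mathcomp Require Import all_classical all_reals.
Set Implicit Arguments. Unset Strict Implicit. Unset Printing Implicit Defensive.
Import Order.TTheory GRing.Theory Num.Theory.
Local Open Scope classical_set_scope.
Local Open Scope ring_scope.

Definition Stiefel (R : realType) (m k : nat) (V : 'M[R]_(m, k)) : Prop :=
  V^T *m V = 1%:M.

Definition orthogonal (R : realType) (h : nat) (U : 'M[R]_h) : Prop :=
  Stiefel U.

Definition frob (R : realType) (m n : nat) (A : 'M[R]_(m, n)) : R :=
  Num.sqrt (\sum_(i < m) \sum_(j < n) A i j ^+ 2).

Definition dist_set (R : realType) (m n : nat) (S T : set 'M[R]_(m, n)) : R :=
  inf [set frob (X - Y) | X in S & Y in T].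

(* The set Q_q (q is a row vector with entries in {+1,-1}); the block
   matrix [[U diag(q) U^T, 0],[0, V]] of size (r+(d-r)) x (r+(K-r)) is
   cast to d x K, and U = blkdiag(U_1,...,U_p) of size (\sum h_i) is
   cast to r x r. *)
Definition Qset (R : realType) (d K r p : nat) (h : 'I_p -> nat)
    (Hsum : (\sum_(i < p) h i)%N = r)
    (Hd : (r + (d - r))%N = d) (HK : (r + (K - r))%N = K)
    (q : 'rV[R]_r) : set 'M[R]_(d, K) :=
  [set X | exists (Us : forall i : 'I_p, 'M[R]_(h i)) (V : 'M[R]_(d - r, K - r)),
     (forall i, orthogonal (Us i)) /\ Stiefel V /\
     let U : 'M[R]_r := castmx (Hsum, Hsum) (\mxdiag_(i < p) Us i) in
     X = castmx (Hd, HK) (block_mx (U *m diag_mx q *m U^T) 0 0 V)].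

(* Main.v *)
Require Import Defs.
From HB Require Import structures.
From mathcomp Require Import all_boot all_order all_algebra all_fingroup.
From mathcomp Require Import all_classical all_reals.
Import Order.TTheory GRing.Theory Num.Theory.
Local Open Scope classical_set_scope.
Local Open Scope ring_scope.
From mathcomp Require Import ring lra.
Section Alg.
Variables (R : realType).
Definition sqs m n (A : 'M[R]_(m,n)) := \sum_i \sum_j A i j ^+ 2.
Arguments sqs {m n}.

Lemma sqs_ge0 m n (A : 'M[R]_(m,n)) : 0 <= sqs A.
Proof. by apply: sumr_ge0 => i _; apply: sumr_ge0 => j _; apply: sqr_ge0. Qed.

Lemma sqs_tr m n (A : 'M[R]_(m,n)) : sqs A = \tr (A^T *m A).
Proof.
rewrite /mxtrace /sqs exchange_big /=; apply: eq_bigr => i _.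
rewrite mxE; apply: eq_bigr => j _; by rewrite mxE expr2.
Qed.

Lemma sqsN m n (A : 'M[R]_(m,n)) : sqs (- A) = sqs A.
Proof. by apply: eq_bigr => i _; apply: eq_bigr => j _; rewrite mxE sqrrN. Qed.

Lemma sqs_cast m1 n1 m2 n2 (e : (m1 = m2) * (n1 = n2)) (A : 'M[R]_(m1,n1)) :
  sqs (castmx e A) = sqs A.
Proof. case: e => e1 e2; case: m2 / e1; case: n2 / e2; by rewrite castmx_id. Qed.

Lemma castmxB' m1 n1 m2 n2 (e : (m1 = m2) * (n1 = n2)) (A B : 'M[R]_(m1,n1)) :
  castmx e A - castmx e B = castmx e (A - B).
Proof. case: e => e1 e2; case: m2 / e1; case: n2 / e2; by rewrite !castmx_id. Qed.

Lemma sqs_block m1 m2 n1 n2 (A : 'M[R]_(m1,n1)) (B : 'M[R]_(m1,n2))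
   (C : 'M[R]_(m2,n1)) (D : 'M[R]_(m2,n2)) : sqs A <= sqs (block_mx A B C D).
Proof.
rewrite /sqs big_split_ord /= -[X in X <= _]addr0 lerD //; last first.
  by apply: sumr_ge0 => i _; apply: sumr_ge0 => j _; apply: sqr_ge0.
apply: ler_sum => i _; rewrite big_split_ord /= -[X in X <= _]addr0 lerD //.
  by under [X in _ <= X]eq_bigr do rewrite block_mxEul.
by apply: sumr_ge0 => j _; apply: sqr_ge0.
Qed.

Lemma key n (E T T' : 'M[R]_n) : E^T = E -> E *m E = E -> T^T = T -> T'^T = T' ->
  T *m T = 1%:M -> T' *m T' = 1%:M -> T *m E = E *m T -> T' *m E = E *m T' ->
  2 * (\tr (E *m T') - \tr (E *m T)) <= sqs (E *m (T - T') *m E).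
Proof.
move=> sE iE sT sT' oT oT' cT cT'.
have tB : forall X Y : 'M[R]_n, (X - Y)^T = X^T - Y^T.
  by move=> X Y; apply/matrixP => i j; rewrite !mxE.
have trB : forall X Y : 'M[R]_n, \tr (X - Y) = \tr X - \tr Y.
  by move=> X Y; rewrite /mxtrace -sumrB; apply: eq_bigr => i _; rewrite !mxE.
have tD : forall X Y : 'M[R]_n, (X + Y)^T = X^T + Y^T.
  by move=> X Y; apply/matrixP => i j; rewrite !mxE.
set A := E *m T; set B := E *m T'.
have EA : E *m A = A by rewrite /A mulmxA iE.
have AE : A *m E = A by rewrite /A -mulmxA cT mulmxA iE.
have EB : E *m B = B by rewrite /B mulmxA iE.
have BE : B *m E = B by rewrite /B -mulmxA cT' mulmxA iE.
have AA : A *m A = E by rewrite /A mulmxA -(mulmxA E T E) cT mulmxA iE -mulmxA oT mulmx1.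
have BB : B *m B = E by rewrite /B mulmxA -(mulmxA E T' E) cT' mulmxA iE -mulmxA oT' mulmx1.
have sA : A^T = A by rewrite /A trmx_mul sE sT cT.
have sB : B^T = B by rewrite /B trmx_mul sE sT' cT'.
have -> : E *m (T - T') *m E = A - B by rewrite mulmxBr mulmxBl -/A -/B AE BE.
have h1 : sqs (A - B) = \tr E *+ 2 - \tr (A *m B) *+ 2.
  rewrite sqs_tr tB sA sB mulmxBl !mulmxBr AA BB !trB.
  rewrite (mxtrace_mulC B A); rewrite !mulr2n; ring.
set M := E + A; set N := E - B.
have MM : M *m M = 2%:R *: M.
  rewrite /M mulmxDl !mulmxDr iE EA AE AA; apply/matrixP => i j; rewrite !mxE; ring.
have NN : N *m N = 2%:R *: N.
  rewrite /N mulmxBl !mulmxBr iE EB BE BB; apply/matrixP => i j; rewrite !mxE; ring.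
have h2 : 0 <= \tr (M *m N).
  have : 0 <= sqs (M *m N) by apply: sqs_ge0.
  rewrite sqs_tr trmx_mul /M /N tB tD sE sA sB -/M -/N.
  have -> : (E - B) *m (E + A) = N *m M by [].
  rewrite mulmxA -(mulmxA N) MM -scalemxAr -scalemxAl mxtraceZ -mulmxA mxtrace_mulC.
  rewrite -mulmxA NN -scalemxAr mxtraceZ !pmulr_rge0 //.
have h3 : \tr (M *m N) = \tr E - \tr B + \tr A - \tr (A *m B).
  rewrite /M /N mulmxDl !mulmxBr iE EB AE mxtraceD !trB; ring.
rewrite h1; lra.
Qed.


Lemma Pdiag n (s : 'S_n) (q q' : 'rV[R]_n) : (forall j, q 0 (s j) = q' 0 j) ->
  diag_mx q' = perm_mx s *m diag_mx q *m (perm_mx s)^T.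
Proof.
move=> Hs; apply/matrixP => j k.
rewrite mul_mx_diag [RHS]mxE (bigD1 (s j)) // big1; last first.
  by move=> l nl; rewrite !mxE eq_sym (negbTE nl) mul0r mul0r.
rewrite !mxE eqxx (inj_eq (@perm_inj _ s)) /= addr0 mul1r Hs.
by case: eqVneq => [->|]; rewrite ?mulr1n ?mulr0n ?mulr1 ?mulr0.
Qed.

End Alg.
Arguments sqs {R m n}.
Section BD.
Variables (R : realType) (p : nat) (h : 'I_p -> nat).
Local Notation S := (\sum_(i < p) h i)%N.
Local Notation blk := (@tagnat.sig1 p h).

Definition bd (M : 'M[R]_S) := forall j k : 'I_S, blk j != blk k -> M j k = 0.

Lemma bd_mxdiag (B : forall i, 'M[R]_(h i)) : bd (mxdiag B).
Proof. by move=> j k /negbTE njk; rewrite /mxdiag mxE njk mxE. Qed.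

Lemma bd_mul A B : bd A -> bd B -> bd (A *m B).
Proof.
move=> hA hB j k njk; rewrite mxE big1 // => l _.
case: (eqVneq (blk j) (blk l)) => [e|n1]; last by rewrite hA ?mul0r.
by rewrite hB ?mulr0 // -e.
Qed.

Lemma bd_tr A : bd A -> bd A^T.
Proof. by move=> hA j k njk; rewrite mxE hA // eq_sym. Qed.

Lemma bd_diag (d : 'rV[R]_S) : bd (diag_mx d).
Proof.
move=> j k njk; rewrite mxE; case: eqVneq => [e|_]; last by rewrite mulr0n.
by rewrite e eqxx in njk.
Qed.

Definition Eb (i : 'I_p) : 'M[R]_S := diag_mx (\row_j ((blk j == i)%:R)).

Lemma bd_comm A i : bd A -> A *m Eb i = Eb i *m A.
Proof.
move=> hA; rewrite /Eb mul_mx_diag mul_diag_mx; apply/matrixP => j k; rewrite !mxE.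
case: (eqVneq (blk j) (blk k)) => [->|n1]; first by rewrite mulrC.
by rewrite hA // mul0r mulr0.
Qed.

Lemma bd_eq_mxdiag W : bd W -> W = mxdiag (fun i => submxblock W i i).
Proof.
move=> hW; rewrite -{1}[W]submxblockK /mxdiag; apply/eq_mxblockP => i j.
case: eqVneq => [<-|nij]; first by rewrite conform_mx_id.
apply/matrixP => k l; rewrite !mxE hW // !tagnat.Rank1K //.
Qed.

Lemma mul_mxdiag2 (A B : forall i, 'M[R]_(h i)) :
  mxdiag A *m mxdiag B = mxdiag (fun i => A i *m B i).
Proof.
rewrite {2}/mxdiag mul_mxdiag_mxblock /mxdiag; apply/eq_mxblockP => i j.
case: eqVneq => [<-|nij]; first by rewrite !conform_mx_id.
by rewrite mulmx0.
Qed.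

Lemma orth_mxdiag (Us : forall i, 'M[R]_(h i)) :
  (forall i, Defs.orthogonal (Us i)) -> (mxdiag Us)^T *m mxdiag Us = 1%:M.
Proof.
move=> hU; rewrite tr_mxdiag mul_mxdiag2 -(mxdiagZ 1).
by apply/eq_mxdiag => i; apply: hU.
Qed.

Lemma orth_blocks (Ws : forall i, 'M[R]_(h i)) :
  (mxdiag Ws)^T *m mxdiag Ws = 1%:M -> forall i, Defs.orthogonal (Ws i).
Proof.
rewrite tr_mxdiag mul_mxdiag2 -(mxdiagZ 1) => /eq_mxdiagP H i.
exact: H.
Qed.

Lemma bd_perm (s : 'S_S) : (forall j, blk (s j) = blk j) -> bd (perm_mx s).
Proof.
move=> hs j k njk; rewrite /perm_mx !mxE; case: eqVneq => // e.
by move: njk; rewrite -hs e eqxx.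
Qed.


Definition cnt (q : 'rV[R]_S) i := (\sum_(j | ((blk j == i) && (q 0 j == 1))%R) 1)%N.
Definition ntot i := (\sum_(j | blk j == i) 1)%N.

Lemma sum_bool_nat (P : pred 'I_S) : \sum_j ((P j)%:R : R) = ((\sum_(j | P j) 1)%N)%:R.
Proof. rewrite natr_sum [RHS]big_mkcond; apply: eq_bigr => j _; by case: (P j). Qed.

Lemma m1neq1 : ((-1 : R) == 1) = false.
Proof. by apply/negbTE/eqP => H; lra. Qed.

Lemma tr_Eb_diag (q : 'rV[R]_S) i : (forall j, q 0 j = 1 \/ q 0 j = -1) ->
  \tr (Eb i *m diag_mx q) = 2 * (cnt q i)%:R - (ntot i)%:R.
Proof.
move=> Hq; rewrite /mxtrace /cnt /ntot -!sum_bool_nat mulr_sumr -sumrB.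
apply: eq_bigr => j _; rewrite /Eb mul_diag_mx !mxE eqxx mulr1n.
case: (Hq j) => ->; case: (blk j == i) => /=; rewrite ?eqxx ?m1neq1 /=; lra.
Qed.

Lemma Eb_sym i : (Eb i)^T = Eb i.
Proof. exact: tr_diag_mx. Qed.

Lemma Eb_idem i : Eb i *m Eb i = Eb i.
Proof.
rewrite {1}/Eb mul_diag_mx; apply/matrixP => j k; rewrite !mxE.
by case: (blk j == i); case: (j == k); rewrite /= ?mul1r ?mul0r ?mulr0n.
Qed.

Lemma sqs_Eb i (Z : 'M[R]_S) : sqs (Eb i *m Z *m Eb i) <= sqs Z.
Proof.
apply: ler_sum => j _; apply: ler_sum => k _.
rewrite /Eb mul_diag_mx mul_mx_diag !mxE.
case: (blk j == i); case: (blk k == i);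
  rewrite /= ?mul1r ?mulr1 ?mul0r ?mulr0 ?expr0n /= ?sqr_ge0 ?lexx //.
Qed.

Section TT.
Variables (Us : forall i, 'M[R]_(h i)) (q : 'rV[R]_S).
Hypothesis (HU : forall i, Defs.orthogonal (Us i)) (Hq : forall j, q 0 j = 1 \/ q 0 j = -1).
Let U := mxdiag Us.
Let T := U *m diag_mx q *m U^T.

Lemma UtU : U^T *m U = 1%:M. Proof. exact: orth_mxdiag. Qed.
Lemma UUt : U *m U^T = 1%:M. Proof. exact: (mulmx1C UtU). Qed.

Lemma T_sym : T^T = T.
Proof. by rewrite /T !trmx_mul trmxK tr_diag_mx mulmxA. Qed.

Lemma DD : diag_mx q *m diag_mx q = 1%:M.
Proof.
rewrite mul_diag_mx; apply/matrixP => j k; rewrite !mxE.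
case: eqVneq => [->|_]; last by rewrite mulr0n mulr0.
by rewrite !mulr1n; case: (Hq k) => ->; lra.
Qed.

Lemma T_orth : T *m T = 1%:M.
Proof.
rewrite /T !mulmxA -(mulmxA _ U^T U) UtU mulmx1 -(mulmxA U) DD mulmx1 UUt //.
Qed.

Lemma T_bd : bd T.
Proof. by apply: bd_mul; [apply: bd_mul; [apply: bd_mxdiag|apply: bd_diag]|apply/bd_tr/bd_mxdiag]. Qed.

Lemma T_tr i : \tr (Eb i *m T) = 2 * (cnt q i)%:R - (ntot i)%:R.
Proof.
have hb : bd U^T by apply/bd_tr/bd_mxdiag.
rewrite /T !mulmxA mxtrace_mulC !mulmxA (bd_comm _ i hb).
by rewrite -(mulmxA (Eb i) U^T U) UtU mulmx1 tr_Eb_diag.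
Qed.
End TT.

Lemma perm_exists (q q' : 'rV[R]_S) :
  (forall j, q 0 j = 1 \/ q 0 j = -1) -> (forall j, q' 0 j = 1 \/ q' 0 j = -1) ->
  (forall i, cnt q i = cnt q' i) ->
  exists s : 'S_S, forall j, blk (s j) = blk j /\ q 0 (s j) = q' 0 j.
Proof.
move=> Hq Hq' Hc.
have tE : forall F : 'I_S -> ('I_p * bool)%type,
    val [tuple F j | j < S] = [seq F j | j <- enum 'I_S] by [].
have cm : forall (qq : 'rV[R]_S) (x : ('I_p * bool)%type),
    count_mem x (val [tuple (blk j, qq 0 j == 1) | j < S])
    = if x.2 then cnt qq x.1 else (ntot x.1 - cnt qq x.1)%N.
  move=> qq [i b]; rewrite tE count_map -sum1_count big_enum_cond.
  case: b.
    by rewrite /cnt; apply: eq_bigl => j; rewrite /preim /pred1 /= xpair_eqE eqb_id.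
  rewrite /ntot [in RHS](bigID (fun j => qq 0 j == 1)) /cnt addKn.
  by apply: eq_bigl => j; rewrite /preim /pred1 /= xpair_eqE eqbF_neg.
have pe : perm_eq [tuple (blk j, q' 0 j == 1) | j < S] [tuple (blk j, q 0 j == 1) | j < S].
  by apply/allP => x _; apply/eqP; rewrite !cm Hc.
pose f j := (blk j, q' 0 j == 1). pose g j := (blk j, q 0 j == 1).
case/tuple_permP: pe => s Hs.
exists s => j.
have := congr1 (fun l => nth (f j) l j) Hs.
rewrite /= nth_mktuple nth_mktuple tnth_mktuple /f /g => /eqP.
rewrite xpair_eqE => /andP [/eqP e1 /eqP e2]; split => //.
move: e2; case: (Hq' j) => ->; case: (Hq (s j)) => ->; rewrite ?eqxx ?m1neq1 //.
Qed.


Section Main.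
Variables (d K : nat) (Hd : (S + (d - S))%N = d) (HK : (S + (K - S))%N = K).
Hypothesis HKd : (K <= d)%N.

Let QS q := @Qset R d K S p h (erefl S) Hd HK q.

Lemma inQ q X : QS q X <-> exists Us V, (forall i, Defs.orthogonal (Us i)) /\ Stiefel V /\
  X = castmx (Hd, HK) (block_mx (mxdiag Us *m diag_mx q *m (mxdiag Us)^T) 0 0 V).
Proof.
rewrite /QS /Qset; split => -[Us [V [o [sV e]]]]; exists Us, V; split => //; split => //;
  by move: e; rewrite /= ?castmx_id.
Qed.

Lemma QS_nonempty q : exists X, QS q X.
Proof.
exists (castmx (Hd, HK) (block_mx (mxdiag (fun i => (1%:M : 'M[R]_(h i))) *m diag_mx q
   *m (mxdiag (fun i => (1%:M : 'M[R]_(h i))))^T) 0 0 (pid_mx (K - S)))).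
apply/inQ; exists (fun i => 1%:M), (pid_mx (K - S)); split; last split => //.
  by move=> i; rewrite /Defs.orthogonal /Stiefel trmx1 mulmx1.
rewrite /Stiefel tr_pid_mx pid_mx_id ?pid_mx_1 //.
by rewrite leq_sub2r.
Qed.

Lemma subQ (q q' : 'rV[R]_S) : (forall j, q 0 j = 1 \/ q 0 j = -1) -> (forall j, q' 0 j = 1 \/ q' 0 j = -1) ->
  (forall i, cnt q i = cnt q' i) -> QS q `<=` QS q'.
Proof.
move=> Hq Hq' Hc X /inQ [Us [V [oU [sV ->]]]]; apply/inQ.
have [s Hs] := @perm_exists q' q Hq' Hq (fun i => esym (Hc i)).
set U := mxdiag Us; set P : 'M[R]_S := perm_mx s.
have bUP : bd (U *m P).
  apply: bd_mul; first exact: bd_mxdiag.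
  by apply: bd_perm => j; case: (Hs j).
have oUP : (U *m P)^T *m (U *m P) = 1%:M.
  rewrite trmx_mul mulmxA -(mulmxA _ U^T U) orth_mxdiag // mulmx1 /P.
  by rewrite tr_perm_mx -perm_mxM mulVg perm_mx1.
exists (fun i => submxblock (U *m P) i i), V; split; last split => //.
  by apply: orth_blocks; rewrite -bd_eq_mxdiag.
rewrite -bd_eq_mxdiag //.
have Hs' : forall j, q' 0 (s j) = q 0 j by move=> j; case: (Hs j).
by rewrite (@Pdiag _ _ s q' q Hs') trmx_mul !mulmxA.
Qed.

Lemma dist2 (q q' : 'rV[R]_S) X Y : (forall j, q 0 j = 1 \/ q 0 j = -1) -> (forall j, q' 0 j = 1 \/ q' 0 j = -1) ->
  ~~ [forall i, cnt q i == cnt q' i] -> QS q X -> QS q' Y -> 2 <= frob (X - Y).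
Proof.
move=> Hq Hq' /forallPn [i0 nc] /inQ [Us [V [oU [sV ->]]]] /inQ [Us' [V' [oU' [sV' ->]]]].
set T := mxdiag Us *m diag_mx q *m (mxdiag Us)^T.
set T' := mxdiag Us' *m diag_mx q' *m (mxdiag Us')^T.
change (2 <= Num.sqrt (sqs (castmx (Hd, HK) (block_mx T 0 0 V) - castmx (Hd, HK) (block_mx T' 0 0 V')))).
rewrite castmxB' sqs_cast.
have hb : sqs (T - T') <= sqs (block_mx T 0 0 V - block_mx T' 0 0 V').
  rewrite (_ : block_mx T 0 0 V - block_mx T' 0 0 V' = block_mx (T - T') (0 - 0) (0 - 0) (V - V')).
    exact: sqs_block.
  by rewrite opp_block_mx add_block_mx.
have hE := sqs_Eb i0 (T - T').
have k1 := @key _ _ _ _ _ (Eb_sym i0) (Eb_idem i0) (T_sym Us q) (T_sym Us' q') (@T_orth Us q oU Hq) (@T_orth Us' q' oU' Hq')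
   (bd_comm _ i0 (T_bd Us q)) (bd_comm _ i0 (T_bd Us' q')).
have k2 := @key _ _ _ _ _ (Eb_sym i0) (Eb_idem i0) (T_sym Us' q') (T_sym Us q) (@T_orth Us' q' oU' Hq') (@T_orth Us q oU Hq)
   (bd_comm _ i0 (T_bd Us' q')) (bd_comm _ i0 (T_bd Us q)).
rewrite (@T_tr Us q oU Hq) (@T_tr Us' q' oU' Hq') in k1 k2.
rewrite -/T -/T' in k1 k2.
have e2 : sqs (Eb i0 *m (T' - T) *m Eb i0) = sqs (Eb i0 *m (T - T') *m Eb i0).
  by rewrite -opprB mulmxN mulNmx sqsN.
rewrite e2 in k2.
have h4 : 4 <= sqs (block_mx T 0 0 V - block_mx T' 0 0 V').
  case: (ltngtP (cnt q i0) (cnt q' i0)) => [lt|lt|eq]; last by rewrite eq eqxx in nc.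
    have : ((cnt q i0).+1)%:R <= (cnt q' i0)%:R :> R by rewrite ler_nat.
    rewrite -natr1 => hc; lra.
  have : ((cnt q' i0).+1)%:R <= (cnt q i0)%:R :> R by rewrite ler_nat.
  rewrite -natr1 => hc; lra.
have s2 : Num.sqrt (2 ^+ 2) = 2 :> R by rewrite sqrtr_sqr ger0_norm.
rewrite -{1}s2 ler_sqrt; last exact: sqs_ge0.
by rewrite expr2; lra.
Qed.

Lemma mainS (q q' : 'rV[R]_S) : (forall j, q 0 j = 1 \/ q 0 j = -1) -> (forall j, q' 0 j = 1 \/ q' 0 j = -1) ->
  QS q = QS q' \/ (QS q `&` QS q' = set0 /\ 2 <= dist_set (QS q) (QS q')).
Proof.
move=> Hq Hq'.
case: (boolP [forall i, cnt q i == cnt q' i]) => [/forallP Hc | nHc].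
  left; apply/seteqP; split; apply: subQ => // i; first exact/eqP/Hc.
  exact/esym/eqP/Hc.
right; split.
  apply/seteqP; split => // X [h1 h2]; have := @dist2 q q' X X Hq Hq' nHc h1 h2.
  rewrite subrr /frob big1 ?sqrtr0 => [|i _]; first by lra.
  by rewrite big1 // => j _; rewrite mxE expr0n.
rewrite /dist_set; apply: lb_le_inf.
  have [X0 h0] := QS_nonempty q; have [Y0 h0'] := QS_nonempty q'.
  by exists (frob (X0 - Y0)); exists X0 => //; exists Y0.
by move=> _ [X hX [Y hY <-]]; apply: (@dist2 q q' X Y Hq Hq' nHc).
Qed.
End Main.

End BD.

Theorem proposition3 (R : realType) (d K r p : nat) (h : 'I_p -> nat)
  (Hr1 : (1 <= r)%N) (HrK : (r <= K)%N) (HKd : (K <= d)%N)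
  (Hp : (1 <= p)%N) (Hh : forall i, (0 < h i)%N)
  (Hsum : (\sum_(i < p) h i)%N = r)
  (q q' : 'rV[R]_r)
  (Hq : forall i, q 0 i = 1 \/ q 0 i = -1)
  (Hq' : forall i, q' 0 i = 1 \/ q' 0 i = -1) :
  let Qq := @Qset R d K r p h Hsum (subnKC (leq_trans HrK HKd)) (subnKC HrK) q in
  let Qq' := @Qset R d K r p h Hsum (subnKC (leq_trans HrK HKd)) (subnKC HrK) q' in
  Qq = Qq' \/ (Qq `&` Qq' = set0 /\ 2 <= dist_set Qq Qq').
Proof.
move: (subnKC (leq_trans HrK HKd)) (subnKC HrK) => Hd HK /=.
subst r.
have H := (@mainS R p h d K Hd HK HKd q q' Hq Hq').
exact H.
Qed.
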